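(* Let $\mathcal{X}_V,\mathcal{X}_L$ be finite sets with $N_V=|\mathcal{X}_V|$, $N_L=|\mathcal{X}_L|$, let $\mathcal{P}_M$ be a joint distribution on $\mathcal{X}_V\times\mathcal{X}_L$ with everywhere positive marginals $\mathcal{P}_V,\mathcal{P}_L$, and let $\tilde P_M\in\mathbb{R}^{N_V\times N_L}$, $(\tilde P_M)_{x_v,x_l}=\mathcal{P}_M(x_v,x_l)/\sqrt{\mathcal{P}_V(x_v)\mathcal{P}_L(x_l)}$. Let $\tilde P_M=U\Sigma V^\top$ be a singular value decomposition with $r=\min(N_V,N_L)$, $U\in\mathbb{R}^{N_V\times r}$, $V\in\mathbb{R}^{N_L\times r}$ having orthonormal columns and $\Sigma=\mathrm{diag}(\sigma_1,\dots,\sigma_r)$ with $\sigma_1\ge\dots\ge\sigma_r\ge0$. Let $k\le r$ and let $U^k,V^k$ be the submatrices consisting of the first $k$ columns of $U,V$. Consider the loss, over all functions $f_V:\mathcal{X}_V\to\mathbb{R}^k$, $f_L:\mathcal{X}_L\to\mathbb{R}^k$, $$\mathcal{L}_{\rm SCL}(f_V,f_L)=-2\,\mathbb{E}_{(x_v,x_l)\sim\mathcal{P}_M}f_V(x_v)^\top f_L(x_l)+\mathbb{E}_{x_v^-\sim\mathcal{P}_V,\,x_l^-\sim\mathcal{P}_L}\big(f_V(x_v^-)^\top f_L(x_l^-)\big)^2$$ (with $x_v^-,x_l^-$ independent). Then $\mathcal{L}_{\rm SCL}$ attains its minimum at the encoders given, for all $x_v\in\mathcal{X}_V$, $x_l\in\mathcal{X}_L$,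 by $$f^*_V(x_v)=\frac{1}{\sqrt{\mathcal{P}_V(x_v)}}\big(U^k_{x_v}DR\big)^\top,\qquad f^*_L(x_l)=\frac{1}{\sqrt{\mathcal{P}_L(x_l)}}\big(V^k_{x_l}\,\mathrm{diag}(\sigma_1,\dots,\sigma_k)\,D^{-1}R\big)^\top,$$ where $U^k_{x}$ denotes the row of $U^k$ indexed by $x$ (similarly for $V^k$), $D\in\mathbb{R}^{k\times k}$ is an arbitrary invertible diagonal matrix, and $R\in\mathbb{R}^{k\times k}$ is an arbitrary orthogonal matrix.
   Context: The encoders are assumed expressive enough to realize any functions $f_V,f_L$, i.e., the minimization is over all functions. *)

(* Defs.v *)
From HB Require Import structures.
From mathcomp Require Import all_boot all_order all_algebra.
Set Implicit Arguments. Unset Strict Implicit. Unset Printing Implicit Defensive.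
Import Order.TTheory GRing.Theory Num.Theory.
Local Open Scope ring_scope.

(* The finite sets X_V, X_L are identified with 'I_NV, 'I_NL. A joint
   distribution is a function P : 'I_NV -> 'I_NL -> R. *)

Definition margV (R : nzRingType) (NV NL : nat) (P : 'I_NV -> 'I_NL -> R)
  (xv : 'I_NV) : R := \sum_(xl < NL) P xv xl.
Definition margL (R : nzRingType) (NV NL : nat) (P : 'I_NV -> 'I_NL -> R)
  (xl : 'I_NL) : R := \sum_(xv < NV) P xv xl.

Definition PtildeM (R : rcfType) (NV NL : nat) (P : 'I_NV -> 'I_NL -> R)
  : 'M[R]_(NV, NL) :=
  \matrix_(i, j) (P i j / Num.sqrt (margV P i * margL P j)).

Definition dotr (R : nzRingType) (k : nat) (a b : 'rV[R]_k) : R :=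
  (a *m b^T) 0 0.

Definition L_SCL (R : nzRingType) (NV NL k : nat) (P : 'I_NV -> 'I_NL -> R)
  (fV : 'I_NV -> 'rV[R]_k) (fL : 'I_NL -> 'rV[R]_k) : R :=
  - 2%:R * (\sum_(xv < NV) \sum_(xl < NL) P xv xl * dotr (fV xv) (fL xl))
  + \sum_(xv < NV) \sum_(xl < NL)
      margV P xv * margL P xl * (dotr (fV xv) (fL xl)) ^+ 2.

Definition firstcols (R : Type) (m r k : nat) (hk : (k <= r)%N)
  (M : 'M[R]_(m, r)) : 'M[R]_(m, k) :=
  \matrix_(i, j) M i (widen_ord hk j).

Definition firstentries (R : Type) (r k : nat) (hk : (k <= r)%N)
  (s : 'rV[R]_r) : 'rV[R]_k := \row_j s 0 (widen_ord hk j).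

(* Main.v *)
Require Import Defs.
From HB Require Import structures.
From mathcomp Require Import all_boot all_order all_algebra.
From mathcomp Require Import lra ring.
Import Order.TTheory GRing.Theory Num.Theory.
Local Open Scope ring_scope.

Section S.
Variable R : rcfType.

Lemma sum_ind r k : (k <= r)%N ->
  \sum_(i < r) (if (i < k)%N then 1 else 0 : R) = k%:R.
Proof.
move=> hk; rewrite -big_mkcond /= (big_ord_narrow hk).
by rewrite sumr_const card_ord.
Qed.

Lemma rearr r k (e w : 'I_r -> R) : (k <= r)%N ->
  (forall i, 0 <= e i) -> (forall i j : 'I_r, (i <= j)%N -> e j <= e i) ->
  (forall i, 0 <= w i) -> (forall i, w i <= 1) -> \sum_i w i <= k%:R ->
  \sum_(i < r) e i * w i <= \sum_(i < r) (if (i < k)%N then e i else 0).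
Proof.
move=> hk e0 es w0 w1 ws.
have [t [t0 [ht1 ht2]]] : exists t, 0 <= t /\ (forall i : 'I_r, (i < k)%N -> t <= e i)
   /\ (forall i : 'I_r, (k <= i)%N -> e i <= t).
  case: (ltnP k r) => hk'.
    exists (e (Ordinal hk')); split; first exact: e0.
    by split=> i hi; apply: es => //=; apply: ltnW.
  exists 0; split=> //; split=> i hi; first exact: e0.
  by have := ltn_ord i; rewrite ltnNge (leq_trans hk' hi).
rewrite -subr_ge0 -sumrB.
have H : \sum_(i < r) t * ((if (i < k)%N then 1 else 0) - w i) <=
         \sum_(i < r) ((if (i < k)%N then e i else 0) - e i * w i).
  apply: ler_sum => i _; case: ifP => hi.
    have := ht1 _ hi; have := w1 i; have := w0 i; have := e0 i; nra.
  have hi2 : (k <= i)%N by rewrite leqNgt hi.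
  have := ht2 i hi2; have := w0 i; nra.
apply: le_trans H; rewrite -mulr_sumr sumrB sum_ind //.
by apply: mulr_ge0 => //; rewrite subr_ge0.
Qed.

Lemma mul_self_ge0 (x : R) : 0 <= x * x. Proof. by rewrite -expr2 sqr_ge0. Qed.

Lemma tr_sq_ge0 m n (Z : 'M[R]_(m,n)) : 0 <= \tr (Z *m Z^T).
Proof.
rewrite /mxtrace; apply: sumr_ge0 => i _; rewrite !mxE; apply: sumr_ge0 => j _.
by rewrite mxE mul_self_ge0.
Qed.

Lemma diag_sq_ge0 m n (Z : 'M[R]_(m,n)) i : 0 <= (Z^T *m Z) i i.
Proof. by rewrite mxE; apply: sumr_ge0 => j _; rewrite mxE mul_self_ge0. Qed.

Lemma rowsq_eq0 n m (v : 'rV[R]_n) (W : 'M[R]_(n,m)) :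
  (v *m W *m (v *m W)^T) 0 0 = 0 -> v *m W = 0.
Proof.
rewrite mxE => h; apply/rowP => j; rewrite [RHS]mxE.
have := psumr_eq0P _ h.
have H : forall i : 'I_m, true -> 0 <= (v *m W) 0 i * (v *m W)^T i 0.
  by move=> i _; rewrite [_^T _ _]mxE mul_self_ge0.
move=> /(_ H j isT); rewrite [_^T _ _]mxE => /eqP; rewrite mulf_eq0 orbb => /eqP.
done.
Qed.

Lemma gram_unit n m (W : 'M[R]_(n,m)) : row_free W -> W *m W^T \in unitmx.
Proof.
move=> fW; rewrite -row_free_unit -kermx_eq0; apply/eqP/row_matrixP => i.
rewrite row0; set v := row i _.
have hv : v *m (W *m W^T) = 0 by rewrite -row_mul mulmx_ker row0.
have : v *m W = 0.
  apply: rowsq_eq0; by rewrite trmx_mul -mulmxA (mulmxA W) (mulmxA v) hv mul0mx mxE.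
by move/eqP; rewrite mulmx_free_eq0 // => /eqP.
Qed.

Lemma proj_of r n k (W : 'M[R]_(r,n)) (A : 'M[R]_(n,k)) :
  row_free W -> (A^T <= W)%MS -> (r <= k)%N -> exists Pi : 'M[R]_n,
  [/\ Pi^T = Pi, Pi *m Pi = Pi, Pi *m A = A & \tr Pi <= k%:R].
Proof.
move=> fW sAW rk.
have Gu : W *m W^T \in unitmx by apply: gram_unit.
exists (W^T *m invmx (W *m W^T) *m W); split.
- by rewrite !trmx_mul trmxK trmx_inv trmx_mul trmxK mulmxA.
- rewrite -!mulmxA; congr (_ *m _); congr (_ *m _).
  by rewrite (mulmxA W) (mulmxA (W *m W^T)) mulmxV // mul1mx.
- case/submxP: sAW => X hX.
  have -> : A = W^T *m X^T by rewrite -trmx_mul -hX trmxK.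
  by rewrite -!mulmxA (mulmxA W) (mulmxA (invmx _)) mulVmx // mul1mx.
- by rewrite mxtrace_mulC mulmxA mulmxV // mxtrace1 ler_nat.
Qed.

Lemma proj_exists n k (A : 'M[R]_(n,k)) : exists Pi : 'M[R]_n,
  [/\ Pi^T = Pi, Pi *m Pi = Pi, Pi *m A = A & \tr Pi <= k%:R].
Proof.
apply: (@proj_of _ _ _ (row_base A^T)); first exact: row_base_free.
  by rewrite (eq_row_base A^T) submx_refl.
by rewrite mxrank_tr rank_leq_col.
Qed.

Arguments tr_sq_ge0 {m n}.
Arguments proj_exists {n k}.
Arguments diag_sq_ge0 {m n}.
Lemma ip_bound p q (X Y : 'M[R]_(p,q)) :
  2 * \tr (X *m Y^T) - \tr (Y *m Y^T) <= \tr (X *m X^T).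
Proof.
have := tr_sq_ge0 (X - Y).
rewrite linearB /= mulmxBl !mulmxBr !raddfB /=.
have -> : \tr (Y *m X^T) = \tr (X *m Y^T) by rewrite -mxtrace_tr trmx_mul trmxK.
lra.
Qed.

Lemma key n m r k (S : 'M[R]_(n,m)) (U : 'M[R]_(n,r)) (V : 'M[R]_(m,r)) (s : 'rV[R]_r)
  (U_orth : U^T *m U = 1%:M) (V_orth : V^T *m V = 1%:M)
  (s_ge0 : forall i, 0 <= s 0 i)
  (s_noninc : forall i j : 'I_r, (i <= j)%N -> s 0 j <= s 0 i)
  (svd : S = U *m diag_mx s *m V^T) (hk : (k <= r)%N)
  (A : 'M[R]_(n,k)) (B : 'M[R]_(m,k)) :
  2 * \tr (S *m (A *m B^T)^T) - \tr ((A *m B^T) *m (A *m B^T)^T)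
   <= \sum_(i < r) (if (i < k)%N then s 0 i * s 0 i else 0).
Proof.
have [Pi [PiT PiP PiA Pitr]] := proj_exists A.
set M := A *m B^T.
have E1 : \tr (S *m M^T) = \tr ((Pi *m S) *m M^T).
  have AtPi : A^T *m Pi = A^T by rewrite -{1}PiT -trmx_mul PiA.
  rewrite /M trmx_mul trmxK [RHS]mxtrace_mulC (mulmxA (B *m A^T) Pi S) -(mulmxA B (A^T) Pi) AtPi.
  by rewrite [LHS]mxtrace_mulC.
rewrite E1; apply: le_trans (ip_bound _ _ (Pi *m S) M) _.
set W := U^T *m Pi *m U.
have E2 : \tr (Pi *m S *m (Pi *m S)^T) = \sum_(i < r) s 0 i * s 0 i * W i i.
  rewrite trmx_mul PiT mulmxA mxtrace_mulC !mulmxA PiP.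
  rewrite svd !trmx_mul trmxK tr_diag_mx -!mulmxA (mulmxA (V^T)) V_orth mul1mx.
  rewrite mulmxA mxtrace_mulC -!mulmxA.
  have -> : W = U^T *m (Pi *m U) by rewrite /W mulmxA.
  rewrite /mxtrace; apply: eq_bigr => i _.
  by rewrite mul_diag_mx mxE mul_diag_mx mxE mulrA.
rewrite E2.
apply: rearr => //.
- by move=> i; apply: mulr_ge0.
- move=> i j hij; apply: ler_pM => //; exact: s_noninc.
- move=> i.
  have -> : W = (Pi *m U)^T *m (Pi *m U).
    by rewrite /W trmx_mul PiT mulmxA -(mulmxA (U^T) Pi Pi) PiP.
  exact: diag_sq_ge0.
- move=> i.
  set Q := 1%:M - Pi.
  have QT : Q^T = Q by rewrite /Q linearB /= trmx1 PiT.
  have QQ : Q *m Q = Q by rewrite /Q mulmxBl !mulmxBr !mul1mx !mulmx1 PiP subrr subr0.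
  have : 0 <= ((Q *m U)^T *m (Q *m U)) i i by exact: diag_sq_ge0.
  rewrite trmx_mul QT -mulmxA (mulmxA Q) QQ /Q mulmxBl mul1mx mulmxBr U_orth.
  rewrite /W -mulmxA; move=> h; move: h; rewrite [X in _ <= X]mxE [1%:M i i]mxE eqxx [X in _ + X]mxE /= => h; lra.
- apply: le_trans Pitr.
  set Q := 1%:M - U *m U^T.
  have QT : Q^T = Q by rewrite /Q linearB /= trmx1 trmx_mul trmxK.
  have QQ : Q *m Q = Q.
    rewrite /Q mulmxBl !mulmxBr mul1mx mulmx1 -mulmxA (mulmxA U^T) U_orth mul1mx.
    by rewrite mul1mx subrr subr0.
  have : 0 <= \tr ((Pi *m Q) *m (Pi *m Q)^T) by exact: tr_sq_ge0.
  rewrite trmx_mul QT PiT mxtrace_mulC !mulmxA -(mulmxA Q Pi Pi) PiP mxtrace_mulC mulmxA QQ.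
  rewrite mxtrace_mulC /Q mulmxBr mulmx1 raddfB /= subr_ge0 => h.
  change (\tr W <= \tr Pi); apply: le_trans h; rewrite le_eqVlt; apply/orP; left; apply/eqP.
  by rewrite /W mxtrace_mulC mulmxA [RHS]mxtrace_mulC.
Qed.

Lemma tr_UdV n m r (U : 'M[R]_(n,r)) (V : 'M[R]_(m,r)) (d e : 'rV[R]_r) :
  U^T *m U = 1%:M -> V^T *m V = 1%:M ->
  \tr ((U *m diag_mx d *m V^T) *m (U *m diag_mx e *m V^T)^T) = \sum_i d 0 i * e 0 i.
Proof.
move=> Uo Vo.
rewrite !trmx_mul trmxK tr_diag_mx -!mulmxA (mulmxA (V^T)) Vo mul1mx.
rewrite mxtrace_mulC -!mulmxA Uo mulmx1 /mxtrace; apply: eq_bigr => i _.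
by rewrite mul_diag_mx !mxE eqxx mulr1n.
Qed.

Lemma diag_tr k (D : 'M[R]_k) : is_diag_mx D -> D^T = D.
Proof.
move/is_diag_mxP => h; apply/matrixP => i j; rewrite mxE.
case: (eqVneq i j) => [->//|ne]; rewrite !h //; by rewrite eq_sym.
Qed.
End S.

Set Implicit Arguments. Unset Strict Implicit.
Definition Amat (R : rcfType) n k (p : 'I_n -> R) (g : 'I_n -> 'rV[R]_k) : 'M[R]_(n,k) :=
  \matrix_(i,j) (Num.sqrt (p i) * g i 0 j).

Lemma AmatE (R : rcfType) n m k (p : 'I_n -> R) (q : 'I_m -> R) (g : 'I_n -> 'rV[R]_k) (h : 'I_m -> 'rV[R]_k) i j :
  (Amat p g *m (Amat q h)^T) i j = Num.sqrt (p i) * Num.sqrt (q j) * dotr (g i) (h j).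
Proof.
rewrite /dotr !mxE mulr_sumr; apply: eq_bigr => l _; rewrite !mxE; ring.
Qed.

Lemma loss_mx (R : rcfType) (NV NL k : nat) (P : 'I_NV -> 'I_NL -> R)
  (PV_gt0 : forall xv, 0 < margV P xv) (PL_gt0 : forall xl, 0 < margL P xl)
  (gV : 'I_NV -> 'rV[R]_k) (gL : 'I_NL -> 'rV[R]_k) :
  L_SCL P gV gL =
  - 2%:R * \tr (PtildeM P *m (Amat (margV P) gV *m (Amat (margL P) gL)^T)^T)
  + \tr ((Amat (margV P) gV *m (Amat (margL P) gL)^T)
         *m (Amat (margV P) gV *m (Amat (margL P) gL)^T)^T).
Proof.
rewrite /L_SCL; congr (_ + _); first congr (_ * _).
- rewrite /mxtrace; apply: eq_bigr => i _; rewrite mxE; apply: eq_bigr => j _.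
  rewrite [(_^T) j i]mxE AmatE /PtildeM mxE sqrtrM ?ltW //.
  have a0 : Num.sqrt (margV P i) != 0 by rewrite gt_eqF // sqrtr_gt0.
  have b0 : Num.sqrt (margL P j) != 0 by rewrite gt_eqF // sqrtr_gt0.
  by field; rewrite a0 b0.
- rewrite /mxtrace; apply: eq_bigr => i _; rewrite mxE; apply: eq_bigr => j _.
  rewrite [(_^T) j i]mxE AmatE.
  have ha : margV P i = Num.sqrt (margV P i) ^+ 2 by rewrite sqr_sqrtr // ltW.
  have hb : margL P j = Num.sqrt (margL P j) ^+ 2 by rewrite sqr_sqrtr // ltW.
  set a := Num.sqrt (margV P i) in ha *.
  set b := Num.sqrt (margL P j) in hb *.
  rewrite {1}ha {1}hb; ring.
Qed.
Theorem theorem3p2 (R : rcfType) (NV NL : nat) (P : 'I_NV -> 'I_NL -> R)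
  (P_ge0 : forall xv xl, 0 <= P xv xl)
  (P_sum1 : \sum_(xv < NV) \sum_(xl < NL) P xv xl = 1)
  (PV_gt0 : forall xv, 0 < margV P xv)
  (PL_gt0 : forall xl, 0 < margL P xl)
  (U : 'M[R]_(NV, minn NV NL)) (V : 'M[R]_(NL, minn NV NL))
  (sigma : 'rV[R]_(minn NV NL))
  (U_orth : U^T *m U = 1%:M) (V_orth : V^T *m V = 1%:M)
  (sigma_ge0 : forall i, 0 <= sigma 0 i)
  (sigma_noninc : forall i j : 'I_(minn NV NL), (i <= j)%N -> sigma 0 j <= sigma 0 i)
  (svd : PtildeM P = U *m diag_mx sigma *m V^T)
  (k : nat) (hk : (k <= minn NV NL)%N)
  (D : 'M[R]_k) (D_diag : is_diag_mx D) (D_inv : D \in unitmx)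
  (Rm : 'M[R]_k) (Rm_orth : Rm^T *m Rm = 1%:M) :
  let fV := fun xv : 'I_NV =>
    (Num.sqrt (margV P xv))^-1 *: (row xv (firstcols hk U) *m D *m Rm) in
  let fL := fun xl : 'I_NL =>
    (Num.sqrt (margL P xl))^-1 *:
      (row xl (firstcols hk V) *m diag_mx (firstentries hk sigma) *m invmx D *m Rm) in
  forall (gV : 'I_NV -> 'rV[R]_k) (gL : 'I_NL -> 'rV[R]_k),
    L_SCL P fV fL <= L_SCL P gV gL.
Proof.
move=> fV fL gV gL.
rewrite !loss_mx //.
have sq0 : forall (p : R), 0 < p -> Num.sqrt p * (Num.sqrt p)^-1 = 1.
  by move=> p p0; rewrite mulfV // gt_eqF // sqrtr_gt0.
have Af : Amat (margV P) fV = firstcols hk U *m D *m Rm.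
  apply/matrixP => i j; rewrite mxE /fV -!row_mul [X in _ * X = _]mxE.
  by rewrite [X in _ * (_ * X) = _]mxE mulrA sq0 // mul1r.
have Bf : Amat (margL P) fL =
    firstcols hk V *m diag_mx (firstentries hk sigma) *m invmx D *m Rm.
  apply/matrixP => i j; rewrite mxE /fL -!row_mul [X in _ * X = _]mxE.
  by rewrite [X in _ * (_ * X) = _]mxE mulrA sq0 // mul1r.
set tau := \row_(i < minn NV NL) (if (i < k)%N then sigma 0 i else 0).
have Mf : Amat (margV P) fV *m (Amat (margL P) fL)^T = U *m diag_mx tau *m V^T.
  rewrite Af Bf !trmx_mul tr_diag_mx trmx_inv (diag_tr _ _ _ D_diag) -!mulmxA.
  rewrite (mulmxA Rm) (mulmx1C Rm_orth) mul1mx (mulmxA D) (mulmxV D_inv) mul1mx.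
  apply/matrixP => i j.
  rewrite mulmxA !mxE (bigID (fun l : 'I_(minn NV NL) => (l < k)%N)) /=.
  rewrite [X in _ = _ + X]big1 ?addr0; last first.
    by move=> l /negbTE h; rewrite mul_mx_diag !mxE h mulr0 mul0r.
  rewrite (big_ord_narrow hk); apply: eq_bigr => l _.
  by rewrite mul_diag_mx mul_mx_diag !mxE /= (ltn_ord l) mulrA.
rewrite Mf svd !tr_UdV //.
have := @key R NV NL (minn NV NL) k _ U V sigma U_orth V_orth sigma_ge0 sigma_noninc (erefl _) hk
   (Amat (margV P) gV) (Amat (margL P) gL).
have -> : \sum_i sigma 0 i * tau 0 i =
   \sum_(i < minn NV NL) (if (i < k)%N then sigma 0 i * sigma 0 i else 0).
  by apply: eq_bigr => i _; rewrite mxE; case: ifP; rewrite ?mulr0.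
have -> : \sum_i tau 0 i * tau 0 i =
   \sum_(i < minn NV NL) (if (i < k)%N then sigma 0 i * sigma 0 i else 0).
  by apply: eq_bigr => i _; rewrite mxE; case: ifP; rewrite ?mulr0.
lra.
Qed.
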